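(* Let $\rho$ be a representation of $D^{2,2,2}$, let $\{i,j,k\}=\{1,2,3\}$, and let $a,b\in D^{2,2,2}$. Then: 1. $\psi_i(a)+\psi_i(b)=\psi_i(a+b)$; 2. $\psi_i(a)\cap\psi_i(b)=\psi_i\big((a+x_i)(b+x_jx_k)\big)$; 3. $\psi_i(a)\cap\psi_i(b)=\psi_i\big(a(b+x_i+x_jx_k)\big)$.
   Context: $D^{2,2,2}$ is the modular lattice generated by $x_1,y_1,x_2,y_2,x_3,y_3$ subject only to $x_i\subseteq y_i$ ($i=1,2,3$), with a greatest element $I$ adjoined. Meet is written $ab$, join $a+b$. A representation $\rho$ of $D^{2,2,2}$ in a finite-dimensional vector space $X_0$ is a lattice morphism from $D^{2,2,2}$ to the subspace lattice of $X_0$, with $\rho(I)=X_0$. Write $X_i=\rho(x_i)\subseteq Y_i=\rho(y_i)$. Put $R=Y_1\oplus Y_2\oplus Y_3$ and $X^1_0=\{(\eta_1,\eta_2,\eta_3)\in R:\sum\eta_i=0\}$. Define subspaces of $R$: - $G_i$: triples with $i$-th coordinate in $Y_i$ and the others $0$; - $G'_i$: triples with $i$-th coordinate in $X_i$; - $H'_i$: triples with $i$-th coordinate $0$. $\Phi^+\rho$ is the representation in $X^1_0$ with $\Phi^+\rho(y_i)=G'_i\cap X^1_0$, $\Phi^+\rho(x_i)=H'_i\cap X^1_0$, $\Phi^+\rho(I)=X^1_0$. Set $\nu^1(a)=\Phi^+\rho(a)\subseteq R$. The joint map is $\psi_i(a)=X^1_0+G_i\cap(H'_i+\nu^1(a))$.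 *)

(* Defs.v *)
From HB Require Import structures.
From mathcomp Require Import all_boot all_order all_algebra.
Set Implicit Arguments. Unset Strict Implicit. Unset Printing Implicit Defensive.
Import GRing.Theory.
Local Open Scope ring_scope.
Local Open Scope vspace_scope.

(* Lattice terms over the generators of D^{2,2,2}: x_i, y_i (i : 'I_3,
   index 0,1,2 standing for 1,2,3) and the adjoined top I. Every element of
   D^{2,2,2} is the value of such a term, and a representation is a lattice
   morphism, so the value of a representation at an element is the
   evaluation of any term denoting it. *)
Inductive dterm : Type :=
  | Dx of 'I_3
  | Dy of 'I_3
  | DI
  | Dmeet of dterm & dterm
  | Djoin of dterm & dterm.

Section Rep.
Variables (K : fieldType) (W : vectType K).

Fixpoint deval (fx fy : 'I_3 -> {vspace W}) (top : {vspace W}) (a : dterm)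
  : {vspace W} :=
  match a with
  | Dx i => fx i
  | Dy i => fy i
  | DI => top
  | Dmeet a b => (deval fx fy top a :&: deval fx fy top b)%VS
  | Djoin a b => (deval fx fy top a + deval fx fy top b)%VS
  end.
End Rep.

Section Psi.
Variables (K : fieldType) (V : vectType K).
(* the representation rho in X_0 = V: X i = rho(x_i) <= Y i = rho(y_i) *)
Variables (X Y : 'I_3 -> {vspace V}).

Definition V3 := {ffun 'I_3 -> V}.

Definition coordf (i : 'I_3) : 'Hom(V3, V) := linfun (fun f : V3 => f i).
Definition sumf : 'Hom(V3, V) := linfun (fun f : V3 => (\sum_i f i)%R).

Definition Rsp : {vspace V3} := \bigcap_(i < 3) (coordf i @^-1: Y i).
Definition X10 : {vspace V3} := Rsp :&: lker sumf.
Definition Gsp (i : 'I_3) : {vspace V3} :=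
  Rsp :&: \bigcap_(j < 3 | j != i) lker (coordf j).
Definition G'sp (i : 'I_3) : {vspace V3} := Rsp :&: (coordf i @^-1: X i).
Definition H'sp (i : 'I_3) : {vspace V3} := Rsp :&: lker (coordf i).

(* nu^1(a) = Phi^+ rho (a), viewed as a subspace of R *)
Definition nu1 (a : dterm) : {vspace V3} :=
  deval (fun i => H'sp i :&: X10) (fun i => G'sp i :&: X10) X10 a.

Definition psi (i : 'I_3) (a : dterm) : {vspace V3} :=
  X10 + Gsp i :&: (H'sp i + nu1 a).
End Psi.

(* Main.v *)
Require Import Defs.
From HB Require Import structures.
From mathcomp Require Import all_boot all_order all_algebra.
Local Open Scope ring_scope.
Local Open Scope vspace_scope.
Import GRing.Theory.
Set Implicit Arguments. Unset Strict Implicit.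

Lemma ord3_other (i j k l : 'I_3) : i != j -> i != k -> j != k -> l != i -> l = j \/ l = k.
Proof.
move: i j k l.
by do 4![case=> [[|[|[|?]]] ?]] => //=; rewrite ?eqE /=; try (by left; apply/val_inj); try (by right; apply/val_inj).
Qed.

Section Lin.
Variables (K : fieldType) (V : vectType K).
Definition cfun (i : 'I_3) (f : V3 V) : V := f i.
Fact cfun_lin i : linear (cfun i).
Proof. by move=> a u v; rewrite /cfun !ffunE. Qed.
HB.instance Definition _ i :=
  GRing.isLinear.Build K (V3 V) V _ (cfun i) (cfun_lin i).
Definition sfun (f : V3 V) : V := \sum_i f i.
Fact sfun_lin : linear sfun.
Proof.
move=> a u v; rewrite /sfun scaler_sumr -big_split /=.
by apply: eq_bigr => l _; rewrite !ffunE.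
Qed.
HB.instance Definition _ :=
  GRing.isLinear.Build K (V3 V) V _ sfun sfun_lin.
End Lin.

Section S.
Variables (K : fieldType) (V : vectType K) (X Y : 'I_3 -> {vspace V}).
Hypothesis hXY : forall i, (X i <= Y i)%VS.

Lemma memv_bigcapP (I : finType) (P : pred I) (Vs : I -> {vspace V3 V}) v :
  reflect (forall i, P i -> v \in Vs i) (v \in \bigcap_(i | P i) Vs i).
Proof.
rewrite memvE; apply: (iffP subv_bigcapP) => H i Pi; [rewrite memvE|rewrite -memvE]; exact: H.
Qed.

Lemma coordfE i (f : V3 V) : coordf V i f = f i.
Proof. exact: (lfunE (@cfun K V i) f). Qed.
Lemma sumfE (f : V3 V) : sumf V f = (\sum_l f l)%R.
Proof. exact: (lfunE (@sfun K V) f). Qed.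

Lemma memR f : (f \in Rsp Y) <-> forall l, f l \in Y l.
Proof.
split=> [/memv_bigcapP H l|H]; first by have := H l isT; rewrite -memv_preim coordfE.
by apply/memv_bigcapP=> l _; rewrite -memv_preim coordfE.
Qed.

Lemma memX10 f : (f \in X10 Y) <-> f \in Rsp Y /\ (\sum_l f l)%R = 0%R.
Proof. rewrite /X10 memv_cap memv_ker sumfE; split=> [/andP[-> /eqP]//|[-> ->]]; by rewrite eqxx. Qed.

Lemma memH i f : (f \in H'sp Y i) <-> f \in Rsp Y /\ f i = 0%R.
Proof. rewrite /H'sp memv_cap memv_ker coordfE; split=> [/andP[-> /eqP]//|[-> ->]]; by rewrite eqxx. Qed.

Lemma memG i f : (f \in Gsp Y i) <-> f \in Rsp Y /\ forall l, l != i -> f l = 0%R.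
Proof.
rewrite /Gsp memv_cap; split=> [/andP[-> /memv_bigcapP H]|[-> H]]; [split=> //|rewrite andTb].
  by move=> l /H; rewrite memv_ker coordfE => /eqP.
by apply/memv_bigcapP => l /H; rewrite memv_ker coordfE => ->.
Qed.

Lemma sum_single i (f : V3 V) : (forall l, l != i -> f l = 0%R) -> (\sum_l f l)%R = f i.
Proof. by move=> H; rewrite (bigD1 i) //= big1 ?addr0. Qed.

Lemma sumD (f g : V3 V) : (\sum_l (f + g) l = \sum_l f l + \sum_l g l)%R.
Proof. by rewrite -big_split; apply: eq_bigr => l _; rewrite ffunE. Qed.
Lemma sumB (f g : V3 V) : (\sum_l (f - g) l = \sum_l f l - \sum_l g l)%R.
Proof. by rewrite -sumrB; apply: eq_bigr => l _; rewrite !ffunE. Qed.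

Definition ei i (v : V) : V3 V := [ffun l => if l == i then v else 0%R].

Lemma ei_R i v : v \in Y i -> ei i v \in Rsp Y.
Proof.
move=> hv; apply/memR => l; rewrite ffunE; case: eqP => [->//|_]; exact: mem0v.
Qed.

Lemma X10_R : (X10 Y <= Rsp Y)%VS. Proof. exact: capvSl. Qed.

Lemma nu1_sub a : (nu1 X Y a <= X10 Y)%VS.
Proof.
elim: a => [l|l||a iha b ihb|a iha b ihb] /=; try exact: capvSr; first exact: subvv.
  exact: subv_trans (capvSl _ _) iha.
by rewrite subv_add iha ihb.
Qed.

Lemma psiP i (N : {vspace V3 V}) w : (N <= X10 Y)%VS ->
  (w \in X10 Y + Gsp Y i :&: (H'sp Y i + N)) <->
  w \in Rsp Y /\ exists2 n, n \in N & (\sum_l w l)%R = n i.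
Proof.
move=> hN; split.
  case/memv_addP=> x hx [g /memv_capP[hg /memv_addP[h hh [n hn eg]]] ->].
  case/memX10: (hx) => hxR hx0; case/memG: hg => hgR hg0.
  split; first exact: memvD.
  exists n => //; rewrite sumD hx0 add0r (@sum_single i g hg0) eg.
  by case/memH: hh => _; rewrite ffunE => ->; rewrite add0r.
case=> hwR [n hn hs].
have hnR : n \in Rsp Y by apply: (subvP X10_R); apply: (subvP hN).
have hni : n i \in Y i by move/memR: hnR.
rewrite -[w](subrK (ei i (n i))).
apply: memv_add.
  apply/memX10; split; first by apply: memvB => //; exact: ei_R.
  rewrite sumB hs.
  by rewrite (@sum_single i (ei i (n i))) ?ffunE ?eqxx ?subrr // => l hl; rewrite ffunE (negbTE hl).
apply/memv_capP; split.
  apply/memG; split; first exact: ei_R.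
  by move=> l hl; rewrite ffunE (negbTE hl).
rewrite -[ei i (n i) in X in X \in _](subrK n).
apply: memv_add => //; apply/memH; split; first by apply: memvB => //; exact: ei_R.
by rewrite !ffunE eqxx subrr.
Qed.

Lemma sum_ei i v : (\sum_l ei i v l)%R = v.
Proof.
rewrite (@sum_single i (ei i v)) ?ffunE ?eqxx // => l hl; by rewrite ffunE (negbTE hl).
Qed.

Lemma nuR a n : n \in nu1 X Y a -> n \in Rsp Y.
Proof. by move=> h; apply: (subvP X10_R); apply: (subvP (nu1_sub a)). Qed.
Lemma nu0 a n : n \in nu1 X Y a -> (\sum_l n l)%R = 0%R.
Proof. by move=> h; have /memX10[] := subvP (nu1_sub a) _ h. Qed.
Lemma nuY a n l : n \in nu1 X Y a -> n l \in Y l.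
Proof. by move/nuR/memR. Qed.

Lemma diffH i n1 n2 : n1 \in X10 Y -> n2 \in X10 Y -> n1 i = n2 i ->
  (n1 - n2) \in (H'sp Y i :&: X10 Y).
Proof.
move=> /memX10[h1 s1] /memX10[h2 s2] e; apply/memv_capP; split.
  by apply/memH; split; [apply: memvB | rewrite !ffunE e subrr].
by apply/memX10; split; [apply: memvB | rewrite sumB s1 s2 subrr].
Qed.

Lemma s_zero i j k s : i != j -> i != k -> j != k ->
  s \in ((H'sp Y j :&: X10 Y) :&: (H'sp Y k :&: X10 Y)) -> s i = 0%R.
Proof.
move=> hij hik hjk /memv_capP[/memv_capP[/memH[_ sj] /memX10[_ s0]] /memv_capP[/memH[_ sk] _]].
rewrite -s0 (@sum_single i s) // => l /(ord3_other hij hik hjk) [->|->] //.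
Qed.

Lemma psiE i a w : (w \in psi X Y i a) <->
  w \in Rsp Y /\ exists2 n, n \in nu1 X Y a & (\sum_l w l)%R = n i.
Proof. rewrite /psi; exact: (psiP i w (nu1_sub a)). Qed.

End S.

Unset Implicit Arguments.

Theorem mainTheorem5 (K : fieldType) (V : vectType K)
    (X Y : 'I_3 -> {vspace V})
    (hXY : forall i, (X i <= Y i)%VS)
    (i j k : 'I_3) (hij : i != j) (hik : i != k) (hjk : j != k)
    (a b : dterm) :
  [/\ (psi X Y i a + psi X Y i b)%VS = psi X Y i (Djoin a b),
      (psi X Y i a :&: psi X Y i b)%VS =
        psi X Y i (Dmeet (Djoin a (Dx i)) (Djoin b (Dmeet (Dx j) (Dx k))))
    & (psi X Y i a :&: psi X Y i b)%VS =
        psi X Y i (Dmeet a (Djoin (Djoin b (Dx i)) (Dmeet (Dx j) (Dx k))))].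
Proof.
split; apply/vspaceP => w; apply/idP/idP.
- case/memv_addP=> u /psiE[uR [n1 h1 e1]] [v /psiE[vR [n2 h2 e2]] ->].
  apply/psiE; split; first exact: memvD.
  exists (n1 + n2)%R; first exact: memv_add.
  by rewrite sumD e1 e2 ffunE.
- case/psiE=> wR [n /memv_addP[n1 h1 [n2 h2 ->]] e].
  rewrite -[w](subrK (ei i (n2 i))); apply: memv_add; apply/psiE.
    split; first by apply: memvB => //; apply: ei_R; exact: nuY h2.
    by exists n1 => //; rewrite sumB e sum_ei ffunE addrK.
  split; first by apply: ei_R; exact: nuY h2.
  by exists n2 => //; rewrite sum_ei.
- case/memv_capP=> /psiE[wR [n1 h1 e1]] /psiE[_ [n2 h2 e2]].
  apply/psiE; split => //; exists n2; last by [].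
  apply/memv_capP; split.
    rewrite -[n2](subrK n1) addrC; apply: memv_add => //=.
    by apply: diffH; [exact: (subvP (nu1_sub _ _ _)) h2 | exact: (subvP (nu1_sub _ _ _)) h1 | rewrite -e1 -e2].
  by rewrite -[n2]addr0; apply: memv_add => //; exact: mem0v.
- case/psiE=> wR [n /memv_capP[/memv_addP[p hp [q hq eq]] /memv_addP[r hr [s hs es]]] e].
  apply/memv_capP; split; apply/psiE; split => //.
    exists p => //; rewrite e eq ffunE.
    by move: hq => /memv_capP[/memH[_ ->] _]; rewrite addr0.
  exists r => //; rewrite e es ffunE (s_zero hij hik hjk hs) addr0 //.
- case/memv_capP=> /psiE[wR [n1 h1 e1]] /psiE[_ [n2 h2 e2]].
  apply/psiE; split => //; exists n1; last by [].
  apply/memv_capP; split => //.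
  rewrite -[n1]addr0; apply: memv_add; last exact: mem0v.
  rewrite -[n1](subrK n2) addrC; apply: memv_add => //=.
  by apply: diffH; [exact: (subvP (nu1_sub _ _ _)) h1 | exact: (subvP (nu1_sub _ _ _)) h2 | rewrite -e1 -e2].
- case/psiE=> wR [n /memv_capP[hna /memv_addP[rq /memv_addP[r hr [q hq ->]] [s hs es]]] e].
  apply/memv_capP; split; apply/psiE; split => //; first by exists n.
  exists r => //; rewrite e es !ffunE (s_zero hij hik hjk hs).
  by move: hq => /memv_capP[/memH[_ ->] _]; rewrite !addr0.
Qed.
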